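(* Let $X \subset Y \subset \mathbb{R}^{n}$ be finite sets, let $k \geq 0$ be an integer and $r > 0$, and suppose that $X^{k+1}_{dis}$ is $r$-dense in $Y^{k+1}_{dis}$. Let $0 = s_{0} < s_{1} < \dots < s_{m}$ be the phase-change numbers of $Y$, and let $0 \le i < m$ be such that $2r < s_{i+1} - s_{i}$. Then the inclusion $i: L_{s_{i},k}(X) \to L_{s_{i},k}(Y)$ is a weak homotopy equivalence.
   Context: $\mathbb{R}^n$ carries the Euclidean metric $d$. For subsets $A \subset B$ of a metric space and $r>0$, $A$ is $r$-dense in $B$ if for every $b \in B$ there is an $a \in A$ with $d(a,b) < r$. For a finite $X \subset \mathbb{R}^n$ and $s \ge 0$, $V_{s}(X)$ is the Vietoris–Rips complex: vertex set $X$, simplices the nonempty subsets $\{x_0,\dots,x_p\}$ with $d(x_i,x_j) \le s$ for all $i,j$. For an integer $k \geq 0$, the Lesnick complex $L_{s,k}(X)$ is the full subcomplex of $V_{s}(X)$ on the set of vertices $x \in X$ for which there exist at least $k$ points $x' \in X$, distinct from $x$, with $d(x,x') \leq s$. $X^{k+1}_{dis}$ denotes the set of ordered $(k+1)$-tuples of pairwise distinct points of $X$, regarded as a subset of $\mathbb{R}^{n(k+1)}$ with its Euclidean metric. The phase-change numbers of $Y$ are the distinct values of $d(y,y')$, $y,y' \in Y$, listed as $0 = s_{0} < \dots < s_{m}$. A simplicial map is a weak homotopy equivalence if its geometric realization is a homotopy equivalence. *)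

(* Defs.v *)
From Stdlib Require Import Reals List.
From Stdlib Require Fin.
Open Scope R_scope.

(** Points of R^n: coordinate functions on Fin.t n (equality via funext). *)
Definition point (n : nat) := Fin.t n -> R.

Fixpoint fsum (n : nat) : (Fin.t n -> R) -> R :=
  match n with
  | 0%nat => fun _ => 0
  | S m => fun f => f Fin.F1 + fsum m (fun i => f (Fin.FS i))
  end.

Definition dist (n : nat) (x y : point n) : R :=
  sqrt (fsum n (fun i => (x i - y i) ^ 2)).

Definition tdist (n k : nat) (x y : Fin.t (S k) -> point n) : R :=
  sqrt (fsum (S k) (fun j => fsum n (fun i => (x j i - y j i) ^ 2))).

Definition finite_set {T : Type} (A : T -> Prop) : Prop :=
  exists l : list T, forall x, A x <-> In x l.

Definition dense_dis (n k : nat) (X Y : point n -> Prop) (r : R) : Prop :=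
  forall y : Fin.t (S k) -> point n,
    (forall j, Y (y j)) -> (forall j j', j <> j' -> y j <> y j') ->
    exists x : Fin.t (S k) -> point n,
      (forall j, X (x j)) /\ (forall j j', j <> j' -> x j <> x j') /\
      tdist n k x y < r.

Definition phase_change (n : nat) (Y : point n -> Prop) (m : nat) (s : nat -> R) : Prop :=
  s 0%nat = 0 /\
  (forall j, (j < m)%nat -> s j < s (S j)) /\
  (forall j, (j <= m)%nat -> exists y y', Y y /\ Y y' /\ dist n y y' = s j) /\
  (forall y y', Y y -> Y y' -> exists j, (j <= m)%nat /\ dist n y y' = s j).

(** An (abstract) simplicial complex on vertices in R^n: a predicate on
    vertex sets (simplices). *)
Definition complex (n : nat) := (point n -> Prop) -> Prop.

Definition VR (n : nat) (s : R) (X : point n -> Prop) : complex n :=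
  fun sigma =>
    (exists x, sigma x) /\ (forall x, sigma x -> X x) /\
    (forall x y, sigma x -> sigma y -> dist n x y <= s).

Definition lesnick_vertex (n : nat) (s : R) (k : nat) (X : point n -> Prop)
  (x : point n) : Prop :=
  X x /\ exists l : list (point n), length l = k /\ NoDup l /\
    forall x', In x' l -> X x' /\ x' <> x /\ dist n x x' <= s.

Definition lesnick (n : nat) (s : R) (k : nat) (X : point n -> Prop) : complex n :=
  fun sigma => VR n s X sigma /\ forall x, sigma x -> lesnick_vertex n s k X x.

(** Geometric realization: barycentric coordinate functions t, nonnegative,
    with finite support which is a simplex, summing to 1. *)
Definition bary (n : nat) := point n -> R.

Definition realization (n : nat) (K : complex n) : bary n -> Prop :=
  fun t =>
    (forall v, 0 <= t v) /\ K (fun v => t v <> 0) /\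
    exists l : list (point n), NoDup l /\ (forall v, t v <> 0 <-> In v l) /\
      fold_right Rplus 0 (map t l) = 1.

(** Metric on realizations whose vertices all lie in the finite list V
    (the l1 norm on R^V; induces the standard topology of the realization). *)
Definition bdist (n : nat) (V : list (point n)) (t t' : bary n) : R :=
  fold_right Rplus 0 (map (fun v => Rabs (t v - t' v)) V).

Definition cont_on (n : nat) (V : list (point n)) (A : bary n -> Prop)
  (g : bary n -> bary n) : Prop :=
  forall t, A t -> forall eps, eps > 0 -> exists del, del > 0 /\
    forall t', A t' -> bdist n V t t' < del -> bdist n V (g t) (g t') < eps.

Definition homotopy_on (n : nat) (V : list (point n)) (A : bary n -> Prop)
  (H : R -> bary n -> bary n) : Prop :=
  (forall u t, 0 <= u <= 1 -> A t -> A (H u t)) /\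
  forall u t, 0 <= u <= 1 -> A t -> forall eps, eps > 0 -> exists del, del > 0 /\
    forall u' t', 0 <= u' <= 1 -> A t' ->
      Rabs (u - u') + bdist n V t t' < del -> bdist n V (H u t) (H u' t') < eps.

Definition incl_homotopy_equivalence (n : nat) (V : list (point n))
  (A B : bary n -> Prop) : Prop :=
  (forall t, A t -> B t) /\
  exists g : bary n -> bary n,
    (forall t, B t -> A (g t)) /\ cont_on n V B g /\
    (exists H, homotopy_on n V A H /\
       forall t, A t -> H 0 t = t /\ H 1 t = g t) /\
    (exists H, homotopy_on n V B H /\
       forall t, B t -> H 0 t = t /\ H 1 t = g t).

(** The inclusion simplicial map K -> L (vertices among V) is a weak homotopy
    equivalence: its geometric realization is a homotopy equivalence. *)
Definition weak_he_incl (n : nat) (V : list (point n)) (K L : complex n) : Prop :=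
  incl_homotopy_equivalence n V (realization n K) (realization n L).

(* Main.v *)
Require Import Defs.
From Stdlib Require Import Reals List Lra Lia Arith Psatz ClassicalEpsilon FunctionalExtensionality.
From Stdlib Require Fin.
Import Defs.
Open Scope R_scope.

Lemma fsum_ext n (f g : Fin.t n -> R) : (forall i, f i = g i) -> fsum n f = fsum n g.
Proof. revert f g; induction n; simpl; intros f g H; [reflexivity|].
  rewrite H, (IHn (fun i => f (Fin.FS i)) (fun i => g (Fin.FS i))); auto. Qed.

Lemma fsum_lin n (f g : Fin.t n -> R) a b :
  fsum n (fun i => a * f i + b * g i) = a * fsum n f + b * fsum n g.
Proof. revert f g; induction n; simpl; intros f g; [ring|].
  rewrite (IHn (fun i => f (Fin.FS i)) (fun i => g (Fin.FS i))); ring. Qed.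

Lemma fsum_nonneg n (f : Fin.t n -> R) : (forall i, 0 <= f i) -> 0 <= fsum n f.
Proof. revert f; induction n; simpl; intros f H; [lra|].
  assert (0 <= fsum n (fun i => f (Fin.FS i))) by (apply IHn; auto).
  specialize (H Fin.F1). lra. Qed.

Lemma fsum_ge_term n (j : Fin.t n) (f : Fin.t n -> R) :
  (forall i, 0 <= f i) -> f j <= fsum n f.
Proof. revert f; induction j; intros f H; simpl.
  - assert (0 <= fsum n (fun i => f (Fin.FS i))) by (apply fsum_nonneg; auto). lra.
  - specialize (IHj (fun i => f (Fin.FS i))); simpl in IHj.
    assert (f (Fin.FS j) <= fsum n (fun i => f (Fin.FS i))) by (apply IHj; auto).
    specialize (H Fin.F1). lra. Qed.

Lemma cauchy_schwarz n (a b : Fin.t n -> R) :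
  (fsum n (fun i => a i * b i))^2 <=
  fsum n (fun i => a i ^ 2) * fsum n (fun i => b i ^ 2).
Proof.
  set (A := fsum n (fun i => a i ^ 2)). set (B := fsum n (fun i => b i ^ 2)).
  set (C := fsum n (fun i => a i * b i)).
  assert (Hq : forall l, 0 <= A + 2 * l * C + l^2 * B).
  { intro l. assert (E : fsum n (fun i => (a i + l * b i)^2) = A + 2*l*C + l^2*B).
    { unfold A, B, C.
      rewrite (fsum_ext _ _ (fun i => 1 * (a i ^ 2) + 1 * ((2*l) * (a i * b i) + l^2 * (b i ^2))))
        by (intro; ring).
      rewrite fsum_lin, (fsum_lin n (fun i => a i * b i)). ring. }
    rewrite <- E. apply fsum_nonneg; intro; apply pow2_ge_0. }
  assert (HB : 0 <= B) by (apply fsum_nonneg; intro; apply pow2_ge_0).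
  destruct (Rle_lt_or_eq_dec _ _ HB) as [Bp|B0].
  - specialize (Hq (- C / B)).
    assert (E: A + 2 * (- C / B) * C + (- C / B)^2 * B = A - C^2 / B) by (field; lra).
    rewrite E in Hq. assert (C^2/B <= A) by lra.
    apply (Rmult_le_compat_r B) in H; [|lra]. unfold Rdiv in H.
    rewrite Rmult_assoc, Rinv_l in H by lra. lra.
  - destruct (Req_dec C 0) as [C0|Cn].
    + rewrite C0. rewrite <- B0. lra.
    + specialize (Hq (-(A+1)/(2*C))). rewrite <- B0 in Hq.
      assert (E: A + 2 * (- (A + 1) / (2 * C)) * C + (- (A + 1) / (2 * C))^2 * 0 = -1)
        by (field; auto). lra.
Qed.

Lemma dist_triangle n (x y z : point n) : dist n x z <= dist n x y + dist n y z.
Proof.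
  unfold dist.
  set (a := fun i => x i - y i). set (b := fun i => y i - z i).
  set (A := fsum n (fun i => a i ^ 2)). set (B := fsum n (fun i => b i ^ 2)).
  set (C := fsum n (fun i => a i * b i)).
  assert (HA : 0 <= A) by (apply fsum_nonneg; intro; apply pow2_ge_0).
  assert (HB : 0 <= B) by (apply fsum_nonneg; intro; apply pow2_ge_0).
  assert (E : fsum n (fun i => (x i - z i)^2) = A + 2 * C + B).
  { unfold A, B, C.
    rewrite (fsum_ext _ _ (fun i => 1 * (a i ^ 2) + 1 * (2 * (a i * b i) + 1 * (b i ^2))))
      by (intro; unfold a, b; ring).
    rewrite fsum_lin, (fsum_lin n (fun i => a i * b i)). ring. }
  change (sqrt (fsum n (fun i => (x i - z i) ^ 2)) <= sqrt A + sqrt B). rewrite E.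
  assert (CS := cauchy_schwarz n a b). fold A B C in CS.
  pose proof (sqrt_sqrt A HA). pose proof (sqrt_sqrt B HB).
  pose proof (sqrt_pos A). pose proof (sqrt_pos B).
  assert (HC : C <= sqrt A * sqrt B).
  { destruct (Rle_or_lt C (sqrt A * sqrt B)); auto.
    assert (E2: (sqrt A * sqrt B)^2 = (sqrt A * sqrt A) * (sqrt B * sqrt B)) by ring.
    rewrite H, H0 in E2.
    assert (0 <= sqrt A * sqrt B) by (apply Rmult_le_pos; auto).
    set (p := sqrt A * sqrt B) in *.
    assert (p * p < C * C) by (apply Rmult_le_0_lt_compat; lra).
    simpl in E2, CS. lra. }
  rewrite <- (sqrt_pow2 (sqrt A + sqrt B)) by lra.
  apply sqrt_le_1_alt. nra.
Qed.

Lemma dist_sym n (x y : point n) : dist n x y = dist n y x.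
Proof. unfold dist. f_equal. apply fsum_ext; intro; ring. Qed.

Lemma dist_le_tdist n k (x y : Fin.t (S k) -> point n) j :
  dist n (x j) (y j) <= tdist n k x y.
Proof. unfold dist, tdist. apply sqrt_le_1_alt.
  apply (fsum_ge_term _ j (fun j => fsum n (fun i => (x j i - y j i) ^ 2))).
  intro; apply fsum_nonneg; intro; apply pow2_ge_0. Qed.


Definition lsum {A : Type} (h : A -> R) (l : list A) : R := fold_right Rplus 0 (map h l).

Lemma lsum_app {A : Type} (h : A -> R) (l1 : list A) (l2 : list A) : lsum h (l1 ++ l2) = lsum h l1 + lsum h l2.
Proof. unfold lsum. rewrite map_app. induction l1; simpl; [ring|]. rewrite IHl1; ring. Qed.

Lemma lsum_nonneg {A : Type} (h : A -> R) (l : list A) : (forall v, 0 <= h v) -> 0 <= lsum h l.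
Proof. intro H; induction l; unfold lsum in *; simpl; [lra|]. specialize (H a); lra. Qed.

Lemma lsum_le_cover {A : Type} (h : A -> R) (L : list A) (l : list A) : (forall v, 0 <= h v) -> NoDup L ->
  (forall v, In v L -> h v <> 0 -> In v l) -> lsum h L <= lsum h l.
Proof.
  intros Hn HL; revert l; induction HL as [|a L' Ha HL' IH]; intros l Hc.
  - unfold lsum; simpl. apply lsum_nonneg; auto.
  - destruct (Req_dec (h a) 0) as [E|E].
    + unfold lsum; simpl; rewrite E. fold (lsum h L'). rewrite Rplus_0_l.
      apply IH. intros; apply Hc; simpl; auto.
    + destruct (in_split a l (Hc a (or_introl eq_refl) E)) as [l1 [l2 ->]].
      rewrite lsum_app. unfold lsum at 1 3; simpl. fold (lsum h L') (lsum h l2).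
      assert (lsum h L' <= lsum h (l1 ++ l2)).
      { apply IH. intros v Hv Hv0. assert (In v (l1 ++ a :: l2)) by (apply Hc; simpl; auto).
        apply in_app_or in H. apply in_or_app. destruct H as [H|[H|H]]; auto.
        subst; contradiction. }
      rewrite lsum_app in H. lra.
Qed.

Lemma lsum_eq_cover {A : Type} (h : A -> R) (l1 : list A) (l2 : list A) : (forall v, 0 <= h v) -> NoDup l1 -> NoDup l2 ->
  (forall v, h v <> 0 -> In v l1) -> (forall v, h v <> 0 -> In v l2) ->
  lsum h l1 = lsum h l2.
Proof. intros. apply Rle_antisym; apply lsum_le_cover; auto. Qed.

Lemma lsum_lin {A : Type} (h : A -> R) (h' : A -> R) (a : R) (b : R) (l : list A) :
  lsum (fun v => a * h v + b * h' v) l = a * lsum h l + b * lsum h' l.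
Proof. induction l; unfold lsum in *; simpl; [ring|]. rewrite IHl; ring. Qed.

Lemma lsum_le {A : Type} (h : A -> R) (h' : A -> R) (l : list A) : (forall v, In v l -> h v <= h' v) -> lsum h l <= lsum h' l.
Proof. induction l; intro H; unfold lsum in *; simpl; [lra|].
  assert (h a <= h' a) by (apply H; simpl; auto).
  assert (fold_right Rplus 0 (map h l) <= fold_right Rplus 0 (map h' l)) by
    (apply IHl; intros; apply H; simpl; auto). lra. Qed.

Lemma lsum_abs {A : Type} (h : A -> R) (l : list A) : Rabs (lsum h l) <= lsum (fun v => Rabs (h v)) l.
Proof. induction l; unfold lsum in *; simpl. rewrite Rabs_R0; lra.
  eapply Rle_trans; [apply Rabs_triang|]. lra. Qed.

Lemma lsum_const_bound {A : Type} (h : A -> R) (l : list A) (c : R) : (forall v, In v l -> h v <= c) ->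
  lsum h l <= INR (length l) * c.
Proof. induction l; intro H; unfold lsum in *; cbn [length map fold_right]; [simpl; lra|].
  rewrite S_INR. assert (h a <= c) by (apply H; simpl; auto).
  assert (fold_right Rplus 0 (map h l) <= INR (length l) * c) by
    (apply IHl; intros; apply H; simpl; auto). lra. Qed.

Lemma lsum_swap {A : Type} (F : A -> A -> R) (l : list A) (L : list A) :
  lsum (fun v => lsum (F v) L) l = lsum (fun w => lsum (fun v => F v w) l) L.
Proof. induction l; simpl.
  - unfold lsum; simpl. induction L; simpl; auto. rewrite <- IHL; ring.
  - unfold lsum at 1; simpl. fold (lsum (fun v => lsum (F v) L) l). rewrite IHl.
    transitivity (lsum (fun w => 1 * F a w + 1 * lsum (fun v => F v w) l) L).
    + rewrite lsum_lin; ring.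
    + unfold lsum; simpl. f_equal. apply map_ext; intro; ring.
Qed.

Lemma lsum_zero {A : Type} (h : A -> R) (l : list A) : (forall v, In v l -> h v = 0) -> lsum h l = 0.
Proof. induction l; intro H; unfold lsum in *; simpl; auto.
  rewrite H, IHl; simpl; auto; [ring|]. intros; apply H; simpl; auto. Qed.

Lemma lsum_indic {A : Type} (a : A) (c : R) (L : list A) : NoDup L -> In a L ->
  lsum (fun v => if excluded_middle_informative (a = v) then c else 0) L = c.
Proof. intro HL; induction HL as [|b L' Hb HL' IH]; intro Ha; [destruct Ha|].
  unfold lsum; simpl. fold (lsum (fun v => if excluded_middle_informative (a = v) then c else 0) L').
  destruct (excluded_middle_informative (a = b)) as [->|ne].
  - rewrite lsum_zero; [ring|]. intros v Hv.
    destruct (excluded_middle_informative (b = v)); auto. subst; contradiction.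
  - rewrite IH; [ring|]. destruct Ha; auto. congruence.
Qed.

Lemma lsum_term {A : Type} (h : A -> R) (l : list A) (v : A) : (forall v, 0 <= h v) -> In v l -> h v <= lsum h l.
Proof. intros Hn; induction l; intro Hv; [destruct Hv|]. unfold lsum in *; simpl.
  destruct Hv as [->|Hv].
  - assert (0 <= fold_right Rplus 0 (map h l)) by (apply lsum_nonneg; auto). lra.
  - specialize (IHl Hv). specialize (Hn a). lra. Qed.

Lemma lsum_nz {A : Type} (h : A -> R) (l : list A) : lsum h l <> 0 -> exists v, In v l /\ h v <> 0.
Proof. intros H. destruct (classic (exists v, In v l /\ h v <> 0)) as [E|E]; auto.
  exfalso. apply H. apply lsum_zero. intros v Hv.
  destruct (Req_dec (h v) 0); auto. exfalso; apply E; eauto. Qed.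

Lemma dist_refl n (x : point n) : dist n x x = 0.
Proof. unfold dist. rewrite (fsum_ext _ _ (fun _ => 0 * 0 + 0 * 0)) by (intro; ring).
  rewrite fsum_lin. replace (0 * fsum n (fun _ => 0) + 0 * fsum n (fun _ => 0)) with 0 by ring.
  apply sqrt_0. Qed.

Lemma phase_mono n Y m s : phase_change n Y m s ->
  forall a b, (a <= b)%nat -> (b <= m)%nat -> s a <= s b.
Proof. intros [_ [Hinc _]] a b Hab. induction Hab; intro Hb; [lra|].
  assert (s m0 < s (S m0)) by (apply Hinc; lia). specialize (IHHab ltac:(lia)). lra. Qed.

Lemma snap n Y m s i : phase_change n Y m s -> (i < m)%nat ->
  forall a b, Y a -> Y b -> dist n a b < s (S i) -> dist n a b <= s i.
Proof. intros Hp Him a b Ha Hb Hd. destruct Hp as (H0 & H1 & H2 & H3) eqn:E.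
  destruct (H3 a b Ha Hb) as [j [Hj Ej]]. rewrite Ej in *.
  destruct (le_lt_dec j i).
  - apply (phase_mono n Y m s Hp); lia.
  - assert (s (S i) <= s j) by (apply (phase_mono n Y m s Hp); lia). lra. Qed.

Lemma lesnick_vertex_mono n s k (X Y : point n -> Prop) v :
  (forall x, X x -> Y x) -> lesnick_vertex n s k X v -> lesnick_vertex n s k Y v.
Proof. intros HXY [Hv [l [Hl [Hnd Hin]]]]. split; auto. exists l. split; auto. split; auto.
  intros z Hz; destruct (Hin z Hz) as (? & ? & ?); auto. Qed.

Fixpoint fin_enum (k : nat) : list (Fin.t k) :=
  match k with 0%nat => nil | S k' => Fin.F1 :: map Fin.FS (fin_enum k') end.

Lemma NoDup_map_inj {A B : Type} (f : A -> B) (l : list A) :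
  (forall a b, f a = f b -> a = b) -> NoDup l -> NoDup (map f l).
Proof. intros Hf Hl; induction Hl; simpl; constructor; auto.
  intro Hi. apply in_map_iff in Hi. destruct Hi as [y [Ey Hy]]. apply Hf in Ey; subst; auto. Qed.

Lemma fin_enum_len k : length (fin_enum k) = k.
Proof. induction k; simpl; auto. rewrite length_map; auto. Qed.

Lemma fin_enum_nodup k : NoDup (fin_enum k).
Proof. induction k; simpl; constructor.
  - intro Hi. apply in_map_iff in Hi. destruct Hi as [y [Ey _]]. discriminate.
  - apply NoDup_map_inj; auto. apply Fin.FS_inj. Qed.

Lemma to_nat_FS k (j : Fin.t k) :
  proj1_sig (Fin.to_nat (Fin.FS j)) = S (proj1_sig (Fin.to_nat j)).
Proof. simpl. destruct (Fin.to_nat j); reflexivity. Qed.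

Lemma exists_near n k (X Y : point n -> Prop) r s0 s1 y :
  (forall x, X x -> Y x) -> dense_dis n k X Y r ->
  (forall a b, Y a -> Y b -> dist n a b < s1 -> dist n a b <= s0) ->
  s0 + 2 * r < s1 -> lesnick_vertex n s0 k Y y ->
  exists x, X x /\ dist n y x < r /\ lesnick_vertex n s0 k X x.
Proof.
  intros HXY Hd Hsn Hgap [Yy [l [Hlen [Hnd Hl]]]].
  set (yt := fun j : Fin.t (S k) => nth (proj1_sig (Fin.to_nat j)) (y :: l) y).
  assert (Hnd' : NoDup (y :: l)).
  { constructor; auto. intro Hy. destruct (Hl y Hy) as [_ [ne _]]. auto. }
  assert (HYt : forall j, Y (yt j)).
  { intro j. unfold yt. destruct (Fin.to_nat j) as [p Hp]; cbn [proj1_sig].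
    assert (In (nth p (y :: l) y) (y :: l)) by (apply nth_In; simpl; lia).
    destruct H as [<-|H]; auto. apply Hl; auto. }
  assert (Hdt : forall j j', j <> j' -> yt j <> yt j').
  { intros j j' ne E. apply ne. apply Fin.to_nat_inj. unfold yt in E.
    destruct (Fin.to_nat j) as [p Hp], (Fin.to_nat j') as [q Hq]; cbn [proj1_sig] in *.
    apply (proj1 (NoDup_nth (y :: l) y) Hnd'); simpl; auto; lia. }
  destruct (Hd yt HYt Hdt) as [xt [HXt [Hxd Htd]]].
  assert (Hc : forall j, dist n (yt j) (xt j) < r).
  { intro j. rewrite dist_sym. eapply Rle_lt_trans; [apply dist_le_tdist|]. exact Htd. }
  assert (Ey : yt Fin.F1 = y) by reflexivity.
  exists (xt Fin.F1). split; [auto|]. split; [rewrite <- Ey; auto|].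
  split; [auto|].
  exists (map (fun j => xt (Fin.FS j)) (fin_enum k)). split; [rewrite length_map, fin_enum_len; auto|].
  split.
  { apply NoDup_map_inj; [|apply fin_enum_nodup]. intros a b E.
    destruct (classic (a = b)) as [|ne]; auto. exfalso.
    apply (Hxd (Fin.FS a) (Fin.FS b)); auto. intro E2; apply ne; apply Fin.FS_inj; auto. }
  intros x' Hx'. apply in_map_iff in Hx'. destruct Hx' as [j [<- _]].
  split; [auto|]. split.
  { intro E. apply (Hxd (Fin.FS j) Fin.F1); auto. discriminate. }
  apply Hsn; auto.
  assert (Hyj : dist n y (yt (Fin.FS j)) <= s0).
  { unfold yt. rewrite to_nat_FS. simpl. destruct (Fin.to_nat j) as [p Hp]; simpl.
    apply Hl. apply nth_In. lia. }
  pose proof (Hc Fin.F1). pose proof (Hc (Fin.FS j)). rewrite Ey in H.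
  pose proof (dist_triangle n (xt Fin.F1) y (xt (Fin.FS j))).
  pose proof (dist_triangle n y (yt (Fin.FS j)) (xt (Fin.FS j))).
  rewrite (dist_sym n (xt Fin.F1) y) in H1. lra.
Qed.

Lemma lsum_ext_in {A : Type} (h h' : A -> R) (l : list A) :
  (forall v, In v l -> h v = h' v) -> lsum h l = lsum h' l.
Proof. intro H. apply Rle_antisym; apply lsum_le; intros v Hv; rewrite (H v Hv); lra. Qed.

Lemma scal_abs c x : 0 <= c <= 1 -> Rabs (c * x) <= Rabs x.
Proof. intro Hc. rewrite Rabs_mult, (Rabs_pos_eq c) by lra.
  pose proof (Rabs_pos x). nra. Qed.

Lemma abs4 x y z w : Rabs (x + y + z + w) <= Rabs x + Rabs y + Rabs z + Rabs w.
Proof. eapply Rle_trans; [apply Rabs_triang|]. eapply Rle_trans;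
  [apply Rplus_le_compat_r; eapply Rle_trans; [apply Rabs_triang|]; apply Rplus_le_compat_r; apply Rabs_triang|].
  lra. Qed.

Lemma lesnick_mono n s k (X Y : point n -> Prop) sigma :
  (forall x, X x -> Y x) -> lesnick n s k X sigma -> lesnick n s k Y sigma.
Proof. intros HXY [[Hne [HX Hd]] Hl]. split; [split; [auto|split; auto]|].
  intros x Hx; apply lesnick_vertex_mono with X; auto. Qed.

Lemma realization_mono n (K K' : complex n) t :
  (forall sigma, K sigma -> K' sigma) -> realization n K t -> realization n K' t.
Proof. intros HK [H1 [H2 H3]]. split; auto. Qed.

Theorem corollary4 (n k : nat) (X Y : point n -> Prop) (lY : list (point n))
  (r : R) (m : nat) (s : nat -> R) (i : nat) :
  (forall y, Y y <-> In y lY) ->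
  finite_set X ->
  (forall x, X x -> Y x) ->
  r > 0 ->
  dense_dis n k X Y r ->
  phase_change n Y m s ->
  (i < m)%nat ->
  2 * r < s (S i) - s i ->
  weak_he_incl n lY (lesnick n (s i) k X) (lesnick n (s i) k Y).
Proof.
  intros HlY HXfin HXY Hr Hd Hp Him Hgap.
  set (s0 := s i).
  assert (Hsn : forall a b, Y a -> Y b -> dist n a b < s (S i) -> dist n a b <= s0)
    by (intros; eapply snap; eauto).
  assert (Hgap' : s0 + 2 * r < s (S i)) by (unfold s0; lra).
  set (P := fun y x => X x /\ dist n y x < r /\ lesnick_vertex n s0 k X x).
  set (f := fun y => match excluded_middle_informative (exists x, P y x) with
     | left e => proj1_sig (constructive_indefinite_description _ e) | right _ => y end).
  assert (Hf : forall y, lesnick_vertex n s0 k Y y -> P y (f y)).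
  { intros y Hy. unfold f. destruct (excluded_middle_informative _) as [e|ne].
    - exact (proj2_sig (constructive_indefinite_description _ e)).
    - exfalso; apply ne. eapply exists_near; eauto. }
  set (L := nodup (fun a b : point n => excluded_middle_informative (a = b)) lY).
  assert (HLnd : NoDup L) by apply NoDup_nodup.
  assert (HL : forall v, In v L <-> Y v).
  { intro v. unfold L. rewrite nodup_In. symmetry; apply HlY. }
  set (F := fun (t : bary n) (v w : point n) =>
              if excluded_middle_informative (f w = v) then t w else 0).
  set (g := fun (t : bary n) (v : point n) => lsum (F t v) L).
  set (hom := fun (u : R) (t : bary n) (v : point n) => (1 - u) * t v + u * g t v).
  assert (Rfacts : forall Z : point n -> Prop, (forall v, Z v -> Y v) -> forall t,
     realization n (lesnick n s0 k Z) t ->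
     (forall v, 0 <= t v) /\ (forall v, t v <> 0 -> lesnick_vertex n s0 k Z v) /\
     (forall a b, t a <> 0 -> t b <> 0 -> dist n a b <= s0) /\
     (exists x, t x <> 0) /\ lsum t L = 1).
  { intros Z HZ t [Hnn [[[Hne [_ Hdd]] Hlv] [lt [Hnd [Hsupp Hsum]]]]].
    split; auto. split; [intros v Hv; apply Hlv; exact Hv|].
    split; [intros a b Ha Hb; apply Hdd; auto|]. split; [exact Hne|].
    transitivity (lsum t lt); [|exact Hsum]. apply lsum_eq_cover; auto.
    - intros v Hv. apply HL. apply HZ. apply (Hlv v Hv).
    - intros v Hv. apply Hsupp; auto. }
  assert (Fnn : forall t v w, (forall v, 0 <= t v) -> 0 <= F t v w).
  { intros t v w H. unfold F. destruct (excluded_middle_informative _); auto; lra. }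
  assert (Gnn : forall t v, (forall v, 0 <= t v) -> 0 <= g t v).
  { intros t v H. apply lsum_nonneg. intro; auto. }
  assert (Gle : forall t v, (forall v, 0 <= t v) -> g t v <= lsum t L).
  { intros t v H. apply lsum_le. intros w _. unfold F.
    destruct (excluded_middle_informative _); [lra|apply H]. }
  assert (Real : forall Z W : point n -> Prop, (forall v, Z v -> Y v) -> (forall v, W v -> Y v) ->
     forall u t, 0 <= u <= 1 -> realization n (lesnick n s0 k Z) t ->
     (forall v, u <> 1 -> t v <> 0 -> lesnick_vertex n s0 k W v) ->
     (forall w, u <> 0 -> t w <> 0 -> lesnick_vertex n s0 k W (f w)) ->
     realization n (lesnick n s0 k W) (hom u t)).
  { intros Z W HZ HW u t Hu Ht H1 H2.
    destruct (Rfacts Z HZ t Ht) as (Tnn & Tlv & Tdd & [x0 Hx0] & Tsum).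
    assert (TY : forall v, t v <> 0 -> Y v) by (intros v Hv; apply HZ, (Tlv v Hv)).
    assert (Tf : forall w, t w <> 0 -> P w (f w)).
    { intros w Hw; apply Hf; apply lesnick_vertex_mono with Z; auto. }
    assert (Hnn : forall v, 0 <= hom u t v).
    { intro v. unfold hom. pose proof (Tnn v); pose proof (Gnn t v Tnn). nra. }
    assert (Hsupp : forall v, hom u t v <> 0 ->
              (u <> 1 /\ t v <> 0) \/ exists w, u <> 0 /\ t w <> 0 /\ f w = v).
    { intros v Hv. unfold hom in Hv.
      destruct (Req_dec ((1-u) * t v) 0) as [E1|E1].
      - right. assert (E2 : u * g t v <> 0) by lra.
        assert (U0 : u <> 0) by (intro E; apply E2; rewrite E; ring).
        assert (G0 : g t v <> 0) by (intro E; apply E2; rewrite E; ring).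
        destruct (lsum_nz _ _ G0) as [w [Hw Hw0]]. unfold F in Hw0.
        destruct (excluded_middle_informative (f w = v)) as [E|E]; [|contradiction].
        exists w; auto.
      - left. split; intro E; apply E1; [rewrite E; ring| rewrite E; ring]. }
    assert (Hsupp2 : forall v, hom u t v <> 0 ->
              lesnick_vertex n s0 k W v /\ exists w, t w <> 0 /\ dist n w v < r).
    { intros v Hv. destruct (Hsupp v Hv) as [[Hu1 Htv]|[w [Hu0 [Htw <-]]]].
      - split; auto. exists v; split; auto. rewrite dist_refl; lra.
      - split; auto. exists w; split; auto. destruct (Tf w Htw) as (_ & ? & _); auto. }
    split; [exact Hnn|]. split.
    - split; [split|].
      + destruct (Req_dec u 1) as [U1|U1].
        * exists (f x0). assert (t x0 <= g t (f x0)).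
          { unfold g. replace (t x0) with (F t (f x0) x0).
            - apply lsum_term; [intro; apply Fnn; auto|]. apply HL; auto.
            - unfold F. destruct (excluded_middle_informative _); congruence. }
          pose proof (Tnn x0). unfold hom. rewrite U1. intro E.
          assert (t x0 > 0) by lra. lra.
        * exists x0. unfold hom. pose proof (Tnn x0). pose proof (Gnn t x0 Tnn).
          assert (t x0 > 0) by lra. intro E. nra.
      + split.
        * intros v Hv. apply (proj1 (Hsupp2 v Hv)).
        * intros a b Ha Hb. destruct (Hsupp2 a Ha) as [[Wa _] [wa [Ha1 Ha2]]].
          destruct (Hsupp2 b Hb) as [[Wb _] [wb [Hb1 Hb2]]].
          apply Hsn; auto.
          pose proof (dist_triangle n a wa b). pose proof (dist_triangle n wa wb b).
          pose proof (Tdd wa wb Ha1 Hb1). rewrite dist_sym in Ha2. lra.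
      + intros v Hv. apply (proj1 (Hsupp2 v Hv)).
    - exists (filter (fun v => if Req_dec_T (hom u t v) 0 then false else true) L).
      split; [apply NoDup_filter; auto|]. split.
      + intro v. rewrite filter_In. split.
        * intro Hv. split.
          -- apply HL. apply HW. apply (proj1 (Hsupp2 v Hv)).
          -- destruct (Req_dec_T (hom u t v) 0); congruence.
        * intros [_ Hb]. destruct (Req_dec_T (hom u t v) 0); congruence.
      + change (lsum (hom u t) (filter (fun v => if Req_dec_T (hom u t v) 0 then false else true) L) = 1).
        transitivity (lsum (hom u t) L).
        * apply lsum_eq_cover; auto. 
          -- apply NoDup_filter; auto.
          -- intros v Hv. apply filter_In. split.
             ++ apply HL. apply HW. apply (proj1 (Hsupp2 v Hv)).
             ++ destruct (Req_dec_T (hom u t v) 0); congruence.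
          -- intros v Hv. apply HL. apply HW. apply (proj1 (Hsupp2 v Hv)).
        * assert (Gsum : lsum (g t) L = lsum t L).
          { unfold g. rewrite (lsum_swap (F t) L L).
            apply lsum_ext_in. intros w _.
            destruct (Req_dec (t w) 0) as [E|E].
            - rewrite E. apply lsum_zero. intros v _. unfold F. destruct (excluded_middle_informative _); auto.
            - unfold F. apply lsum_indic; auto. apply HL.
              destruct (Tf w E) as (Xf & _). auto. }
          unfold hom. rewrite (lsum_lin t (g t)). rewrite Gsum, Tsum. ring. }
  set (C := 1 + 2 * INR (length lY)).
  assert (Cpos : 0 < C) by (unfold C; pose proof (pos_INR (length lY)); lra).
  assert (Bnd : forall u u' t t', 0 <= u <= 1 -> 0 <= u' <= 1 ->
     realization n (lesnick n s0 k Y) t -> realization n (lesnick n s0 k Y) t' ->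
     bdist n lY (hom u t) (hom u' t') <= C * (Rabs (u - u') + bdist n lY t t')).
  { intros u u' t t' Hu Hu' Ht Ht'.
    destruct (Rfacts Y (fun v H => H) t Ht) as (Tnn & Tlv & _ & _ & Tsum).
    destruct (Rfacts Y (fun v H => H) t' Ht') as (Tnn' & Tlv' & _ & _ & Tsum').
    set (D := lsum (fun w => Rabs (t w - t' w)) L).
    assert (HD : D <= bdist n lY t t').
    { apply lsum_le_cover; auto. intro; apply Rabs_pos. intros v Hv _. apply HlY, HL; auto. }
    assert (HD0 : 0 <= D) by (apply lsum_nonneg; intro; apply Rabs_pos).
    assert (Gd : forall v, Rabs (g t v - g t' v) <= D).
    { intro v. unfold g. replace (lsum (F t v) L - lsum (F t' v) L) with
        (lsum (fun w => 1 * F t v w + (-1) * F t' v w) L) by (rewrite lsum_lin; ring).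
      eapply Rle_trans; [apply lsum_abs|]. apply lsum_le. intros w _. unfold F.
      destruct (excluded_middle_informative _).
      - right. f_equal. ring.
      - replace (1 * 0 + -1 * 0) with 0 by ring. rewrite Rabs_R0. apply Rabs_pos. }
    assert (T1 : forall v, t' v <= 1).
    { intro v. destruct (Req_dec (t' v) 0) as [E|E]; [rewrite E; lra|].
      rewrite <- Tsum'. apply lsum_term; auto. apply HL. apply (Tlv' v E). }
    assert (G1 : forall v, g t' v <= 1) by (intro v; rewrite <- Tsum'; apply Gle; auto).
    assert (Pv : forall v, Rabs (hom u t v - hom u' t' v) <=
                 1 * Rabs (t v - t' v) + 1 * (2 * Rabs (u - u') + D)).
    { intro v. unfold hom.
      replace ((1 - u) * t v + u * g t v - ((1 - u') * t' v + u' * g t' v)) with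
        ((1 - u) * (t v - t' v) + u * (g t v - g t' v) + t' v * (u' - u) + g t' v * (u - u'))
        by ring.
      eapply Rle_trans; [apply abs4|].
      pose proof (scal_abs (1 - u) (t v - t' v) ltac:(lra)).
      pose proof (scal_abs u (g t v - g t' v) Hu).
      pose proof (scal_abs (t' v) (u' - u) (conj (Tnn' v) (T1 v))).
      pose proof (scal_abs (g t' v) (u - u') (conj (Gnn t' v Tnn') (G1 v))).
      rewrite Rabs_minus_sym in H1. pose proof (Gd v). lra. }
    unfold bdist at 1. eapply Rle_trans.
    { apply lsum_le. intros v _. apply Pv. }
    rewrite lsum_lin.
    pose proof (lsum_const_bound (fun _ : point n => 2 * Rabs (u - u') + D) lY
                  (2 * Rabs (u - u') + D) (fun _ _ => Rle_refl _)).
    replace (bdist n lY t t') with (lsum (fun v => Rabs (t v - t' v)) lY) in * by reflexivity.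
    pose proof (pos_INR (length lY)). pose proof (Rabs_pos (u - u')).
    assert (INR (length lY) * D <= INR (length lY) * lsum (fun v => Rabs (t v - t' v)) lY)
      by (apply Rmult_le_compat_l; auto).
    unfold C. nra. }
  assert (Hg1 : forall t, g t = hom 1 t).
  { intro t. apply functional_extensionality; intro v. unfold hom; ring. }
  assert (Hh0 : forall t, hom 0 t = t).
  { intro t. apply functional_extensionality; intro v. unfold hom; ring. }
  assert (AB : forall t, realization n (lesnick n s0 k X) t -> realization n (lesnick n s0 k Y) t).
  { intros t; apply realization_mono. intros; apply lesnick_mono with X; auto. }
  assert (Cont : forall Z : point n -> Prop, (forall t, realization n (lesnick n s0 k Z) t ->
      realization n (lesnick n s0 k Y) t) ->
      forall u t, 0 <= u <= 1 -> realization n (lesnick n s0 k Z) t -> forall eps, eps > 0 ->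
      exists del, del > 0 /\ forall u' t', 0 <= u' <= 1 -> realization n (lesnick n s0 k Z) t' ->
      Rabs (u - u') + bdist n lY t t' < del -> bdist n lY (hom u t) (hom u' t') < eps).
  { intros Z HZ u t Hu Ht eps Heps. exists (eps / C). split.
    - apply Rdiv_lt_0_compat; lra.
    - intros u' t' Hu' Ht' Hdl. eapply Rle_lt_trans; [apply Bnd; auto|].
      apply (Rmult_lt_compat_l C) in Hdl; auto.
      replace (C * (eps / C)) with eps in Hdl by (field; lra). exact Hdl. }
  unfold weak_he_incl, incl_homotopy_equivalence. fold s0.
  split; [exact AB|]. exists g. split; [|split; [|split]].
  - intros t Ht. rewrite Hg1. apply (Real Y X (fun v H => H) HXY 1 t); auto; [lra| |].
    + intros v U; lra.
    + intros w _ Hw. destruct (Rfacts Y (fun v H => H) t Ht) as (_ & Tlv & _).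
      destruct (Hf w (Tlv w Hw)) as (_ & _ & Hx). exact Hx.
  - intros t Ht eps Heps. destruct (Cont Y (fun t H => H) 1 t ltac:(lra) Ht eps Heps) as [del [Hdel Hc]].
    exists del; split; auto. intros t' Ht' Hdl. rewrite !Hg1. apply Hc; auto; [lra|].
    replace (1 - 1) with 0 by ring. rewrite Rabs_R0. lra.
  - exists hom. split; [split|].
    + intros u t Hu Ht. apply (Real X X HXY HXY u t Hu Ht).
      * intros v _ Hv. destruct (Rfacts X HXY t Ht) as (_ & Tlv & _). auto.
      * intros w _ Hw. destruct (Rfacts X HXY t Ht) as (_ & Tlv & _).
        destruct (Hf w (lesnick_vertex_mono _ _ _ X Y _ HXY (Tlv w Hw))) as (_ & _ & Hx). exact Hx.
    + apply (Cont X AB).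
    + intros t _. split; [apply Hh0|symmetry; apply Hg1].
  - exists hom. split; [split|].
    + intros u t Hu Ht. apply (Real Y Y (fun v H => H) (fun v H => H) u t Hu Ht).
      * intros v _ Hv. destruct (Rfacts Y (fun v H => H) t Ht) as (_ & Tlv & _). auto.
      * intros w _ Hw. destruct (Rfacts Y (fun v H => H) t Ht) as (_ & Tlv & _).
        destruct (Hf w (Tlv w Hw)) as (_ & _ & Hx). apply lesnick_vertex_mono with X; auto.
    + apply (Cont Y (fun t H => H)).
    + intros t _. split; [apply Hh0|symmetry; apply Hg1].
Qed.
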